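(* Let $X\sim\mu=p^{\mathbb{Z}^d}$, $Y\sim\nu=q^{\mathbb{Z}^d}$ and let $\phi:X\to Y$ be a finitary homomorphism. Let $n,N\in\mathbb{N}$ with $N\ge2n+1$ and let $\hat\phi^n:A^{\mathbb{T}_N^d}\to(B\cup\{*\})^{\mathbb{T}_N^d}$ be the map of the $(\mathbb{T}_N^d,n)$-modeling of $\phi$. Then for every $\hat x\in A^{\mathbb{T}_N^d}$, \[\mu([\hat x])\le\nu([\hat\phi^n(\hat x)]).\]
   Context: $A,B$ are finite alphabets, $p,q$ probability vectors on $A,B$, $\mu=p^{\mathbb{Z}^d}$, $\nu=q^{\mathbb{Z}^d}$. A homomorphism $\phi:X\to Y$ is a measurable shift-commuting map $A^{\mathbb{Z}^d}\to B^{\mathbb{Z}^d}$ with $\phi_*\mu=\nu$. Its coding radius is $R_\phi(x)=\min\{n\in\mathbb{N}\cup\{\infty\}:\text{for }\mu\text{-a.e. }a,\ a|_{[-n,n]^d}=x|_{[-n,n]^d}\Rightarrow\phi(a)_0=\phi(x)_0\}$; $\phi$ is finitary if $R_\phi<\infty$ a.s. Let $*\notin B$. For $n\in\mathbb{N}$ define $\phi^n_0(x)=\phi(x)_0$ if $R_\phi(x)\le n$ and $\phi^n_0(x)=*$ otherwise; up to a $\mu$-null set, $\phi^n_0(x)$ is a function of $x|_{[-n,n]^d}$. Let $\mathbb{T}_N^d=\mathbb{Z}^d/(N\mathbb{Z})^d$; for a configuration $\hat x$ on $\mathbb{T}_N^d$ and $u\in\mathbb{Z}^d$ write $\hat x_u$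 for $\hat x_{u\bmod N}$. For $N\ge 2n+1$, $\hat\phi^n(\hat x)_u$ is the value of $\phi^n_0$ evaluated at the $N$-periodic extension of $T_{-u}\hat x$, where $(T_{-u}\hat x)_v=\hat x_{v+u}$. Cylinder sets: for $\hat x\in A^{\mathbb{T}_N^d}$, $[\hat x]=\{x\in A^{\mathbb{Z}^d}:x_u=\hat x_u\ \forall u\in[1,N]^d\}$ (so $\mu([\hat x])=\prod_{u\in\mathbb{T}_N^d}p(\hat x_u)$); for $\hat y\in(B\cup\{*\})^{\mathbb{T}_N^d}$, $[\hat y]=\{y\in B^{\mathbb{Z}^d}:\hat y_u\in\{*,y_u\}\ \forall u\in[1,N]^d\}$. *)

(* Defs.v *)
From HB Require Import structures.
From mathcomp Require Import all_boot all_order all_algebra.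
From mathcomp Require Import all_classical all_reals all_analysis.
Set Implicit Arguments. Unset Strict Implicit. Unset Printing Implicit Defensive.
Import Order.TTheory GRing.Theory Num.Theory.
Local Open Scope classical_set_scope.
Local Open Scope ring_scope.

(* nonempty finite alphabets (nonemptiness is forced by the existence of a
   probability vector; the point is only needed by the measurable-space API) *)
#[short(type="finPointedType")]
HB.structure Definition FinPointed := {T of Finite T & isPointed T}.

Definition Zd (d : nat) := {ffun 'I_d -> int}.

Definition site_cyl (d : nat) (A : Type) : set (set (Zd d -> A)) :=
  [set S | exists (u : Zd d) (a : A), S = [set x | x u = a]].

Definition config (d : nat) (A : pointedType) :=
  g_sigma_algebraType (@site_cyl d A).

Definition prob_vector (R : realType) (A : finType) (p : A -> R) :=
  (forall a, 0 <= p a) /\ \sum_(a : A) p a = 1.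

(* mu = p^{Z^d}: the measure of every finite-dimensional cylinder is the product *)
Definition is_bernoulli (R : realType) (d : nat) (A : finPointedType)
    (p : A -> R) (mu : probability (config d A) R) :=
  forall (s : seq (Zd d)) (w : Zd d -> A), uniq s ->
    mu [set x : config d A | forall u, u \in s -> x u = w u]
    = ((\prod_(u <- s) p (w u))%R)%:E.

(* shift: (T_u x)_v = x_{v-u}, so (T_{-u} x)_v = x_{v+u} *)
Definition shift (d : nat) (A : Type) (u : Zd d) (x : Zd d -> A) : Zd d -> A :=
  fun v => x (v - u).

Definition is_homomorphism (R : realType) (d : nat) (A B : finPointedType)
    (mu : probability (config d A) R) (nu : probability (config d B) R)
    (phi : config d A -> config d B) :=
  [/\ measurable_fun setT phi,
      (forall (u : Zd d) (x : config d A), phi (shift u x) = shift u (phi x))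
    & (forall S : set (config d B), measurable S -> nu S = mu (phi @^-1` S))].

Definition inbox (d : nat) (n : nat) (v : Zd d) := forall i, (absz (v i) <= n)%N.

Definition agree (d : nat) (A : Type) (n : nat) (a x : Zd d -> A) :=
  forall v, inbox n v -> a v = x v.

(* the condition defining R_phi(x) <= m (for the single radius m) *)
Definition coding_ok (R : realType) (d : nat) (A B : finPointedType)
    (mu : probability (config d A) R) (phi : config d A -> config d B)
    (x : config d A) (m : nat) :=
  {ae mu, forall a : config d A, agree m a x -> phi a 0 = phi x 0}.

(* R_phi(x) <= n, where R_phi(x) is the least m with coding_ok m *)
Definition radius_le (R : realType) (d : nat) (A B : finPointedType)
    (mu : probability (config d A) R) (phi : config d A -> config d B)
    (x : config d A) (n : nat) :=
  exists m, (m <= n)%N /\ coding_ok mu phi x m.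

Definition finitary (R : realType) (d : nat) (A B : finPointedType)
    (mu : probability (config d A) R) (phi : config d A -> config d B) :=
  {ae mu, forall x : config d A, exists m, coding_ok mu phi x m}.

(* phi^n_0 with values in B ∪ {*} = option B ( * = None ) *)
Definition phin0 (R : realType) (d : nat) (A B : finPointedType)
    (mu : probability (config d A) R) (phi : config d A -> config d B)
    (n : nat) (x : config d A) : option B :=
  if `[< radius_le mu phi x n >] then Some (phi x 0) else None.

(* F is a version of phi^n_0 as a function of x|_{[-n,n]^d}:
   F depends only on the box and agrees with phi^n_0 mu-a.e. *)
Definition box_version (R : realType) (d : nat) (A B : finPointedType)
    (mu : probability (config d A) R) (phi : config d A -> config d B)
    (n : nat) (F : (Zd d -> A) -> option B) :=
  (forall a x : Zd d -> A, agree n a x -> F a = F x) /\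
  {ae mu, forall x : config d A, phin0 mu phi n x = F x}.

Definition tor (d N : nat) := {ffun 'I_d -> 'I_N}.

Lemma wrap_lt (N : nat) (k : 'I_N) (z : int) :
  (absz ((k%:Z + z) %% N%:Z)%Z < N)%N.
Proof.
have N0 : (0 < N)%N by apply: leq_ltn_trans (ltn_ord k).
have h1 := @modz_ge0 (k%:Z + z) N%:Z.
have h2 := @ltz_pmod (k%:Z + z) N%:Z.
have : (0 <= (k%:Z + z) %% N%:Z)%Z by apply: h1; rewrite eqz_nat -lt0n.
have : ((k%:Z + z) %% N%:Z < N%:Z)%Z by apply: h2; rewrite ltz_nat.
case: ((k%:Z + z) %% N%:Z)%Z => // m; rewrite ltz_nat //.
Qed.

Definition wrap (d N : nat) (t : tor d N) (v : Zd d) : tor d N :=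
  [ffun i => Ordinal (wrap_lt (t i) (v i))].

(* N-periodic extension of T_{-t} xh : v |-> xh_{(v + t) mod N} *)
Definition pext (d N : nat) (A : Type) (t : tor d N) (xh : tor d N -> A) : Zd d -> A :=
  fun v => xh (wrap t v).

(* the torus model \hat phi^n, with phi^n_0 realized by the box function F *)
Definition hatphi (d N : nat) (A B : Type) (F : (Zd d -> A) -> option B)
    (xh : tor d N -> A) : tor d N -> option B :=
  fun t => F (pext t xh).

Definition tlift (d N : nat) (t : tor d N) : Zd d :=
  [ffun i => if (t i == 0 :> nat) then N%:Z else (t i)%:Z].

Definition cylA (d N : nat) (A : Type) (xh : tor d N -> A) : set (Zd d -> A) :=
  [set x | forall t, x (tlift t) = xh t].

Definition cylB (d N : nat) (B : Type) (yh : tor d N -> option B) : set (Zd d -> B) :=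
  [set y | forall t, yh t = None \/ yh t = Some (y (tlift t))].

(* Main.v *)
Require Import Defs.
From HB Require Import structures.
From mathcomp Require Import all_boot all_order all_algebra.
From mathcomp Require Import all_classical all_reals all_analysis.
From mathcomp Require Import zify ring lra.
Import Order.TTheory GRing.Theory Num.Theory.
Local Open Scope classical_set_scope.
Local Open Scope ring_scope.
Set Implicit Arguments. Unset Strict Implicit. Unset Printing Implicit Defensive.

Definition cyl {d : nat} {A : Type} (s : seq (Zd d)) (w : Zd d -> A) : set (Zd d -> A) :=
  [set x | forall u, u \in s -> x u = w u].

Section Cyl.
Variables (d : nat) (A : finPointedType).

Lemma site_meas (u : Zd d) (a : A) :
  measurable ([set x | x u = a] : set (config d A)).
Proof. apply: sub_sigma_algebra; by exists u, a. Qed.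

Lemma cyl_meas s w : measurable (cyl s w : set (config d A)).
Proof.
elim: s => [|u s IH].
  have -> : cyl [::] w = setT by apply/seteqP; split => x //= _ u.
  exact: measurableT.
have -> : cyl (u :: s) w = [set x | x u = w u] `&` cyl s w.
  apply/seteqP; split => x /=.
    move=> h; split; first by apply: h; rewrite inE eqxx.
    by move=> v vs; apply: h; rewrite inE vs orbT.
  by move=> [h1 h2] v; rewrite inE => /orP[/eqP->|/h2].
exact: measurableI (site_meas _ _) IH.
Qed.

Lemma cyl_undup s (w : Zd d -> A) : cyl (undup s) w = cyl s w.
Proof. by apply/seteqP; split => x /= h u us; apply: h; rewrite ?mem_undup in us *. Qed.

Variables (R : realType) (p : A -> R) (mu : probability (config d A) R).
Hypothesis hb : is_bernoulli p mu.

Lemma bern_cyl s w : mu (cyl s w) = (\prod_(u <- undup s) p (w u))%:E.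
Proof. by rewrite -cyl_undup; apply: hb; exact: undup_uniq. Qed.

Lemma bern_map (T : eqType) (f : T -> Zd d) (s : seq T) w :
  injective f -> uniq s ->
  mu (cyl (map f s) w) = (\prod_(t <- s) p (w (f t)))%:E.
Proof.
move=> fi us; rewrite bern_cyl undup_map_inj // undup_id // big_map //.
Qed.

End Cyl.

Section Shift.
Variables (d : nat) (A : finPointedType).

Lemma shift_cyl (u : Zd d) s (w : Zd d -> A) :
  (@Defs.shift d A u) @^-1` cyl s w = cyl (map (fun v => v - u) s) (fun z => w (z + u)).
Proof.
apply/seteqP; split => x /=.
  move=> h z /mapP[v vs ->]; rewrite subrK; exact: h.
move=> h v vs; rewrite /Defs.shift (h (v - u)) ?subrK //; exact: map_f.
Qed.

Lemma shift_meas (u : Zd d) : measurable_fun setT (@Defs.shift d A u : config d A -> config d A).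
Proof.
have := (@measurability _ _ (config d A) (config d A) setT (@Defs.shift d A u) (@site_cyl d A)).
apply; first by [].
move=> _ [S [v [a ->]] <-]; rewrite setTI.
have -> : (@Defs.shift d A u) @^-1` [set x | x v = a] = [set x | x (v - u) = a] by [].
exact: site_meas.
Qed.

Variables (R : realType) (p : A -> R) (mu : probability (config d A) R).
Hypothesis hb : is_bernoulli p mu.

Definition cylG : set (set (config d A)) :=
  [set S | S = set0 \/ exists s w, S = cyl s w].

Lemma cylG_sigma : (@measurable _ (config d A)) = <<s cylG >>.
Proof.
apply/seteqP; split.
  apply: smallest_sub; first exact: smallest_sigma_algebra.
  move=> S [v [a ->]]; apply: sub_sigma_algebra; right; exists [:: v], (fun _ => a).
  apply/seteqP; split => x /=; first by move=> xa u; rewrite inE => /eqP ->.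
  by move=> h; apply: h; rewrite inE.
apply: smallest_sub; first exact: sigma_algebra_measurable.
move=> S [->|[s [w ->]]]; [exact: measurable0 | exact: cyl_meas].
Qed.

Lemma cylG_setI : setI_closed cylG.
Proof.
move=> S1 S2 [->|[s1 [w1 ->]]]; first by left; rewrite set0I.
move=> [->|[s2 [w2 ->]]]; first by left; rewrite setI0.
case: (pselect (forall u, u \in s1 -> u \in s2 -> w1 u = w2 u)) => H.
  right; exists (s1 ++ s2), (fun u => if u \in s1 then w1 u else w2 u).
  apply/seteqP; split => x /=.
    move=> [h1 h2] u; rewrite mem_cat; case: ifP => [us1 _|us1 /= us2]; first exact: h1.
    exact: h2.
  move=> h; split => u us.
    by rewrite h ?mem_cat ?us //=.
  case: (boolP (u \in s1)) => us1.
    by rewrite h ?mem_cat ?us1 //= H.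
  by rewrite h ?mem_cat ?us ?orbT //= (negbTE us1).
left; apply/seteqP; split => x //= [h1 h2]; apply: H => u us1 us2.
by rewrite -h1 // -h2.
Qed.

Lemma shift_inv (u : Zd d) (S : set (config d A)) : measurable S ->
  mu ((@Defs.shift d A u) @^-1` S) = mu S.
Proof.
move=> mS.
have mf := shift_meas u.
have cT : cyl [::] (fun _ => point) = (setT : set (config d A)).
  by apply/seteqP; split => x //= _ v.
have := @measure_unique _ R (config d A) cylG (fun _ => setT) cylG_sigma cylG_setI.
move=> /(_ _ _ (pushforward mu (@Defs.shift d A u : config d A -> config d A)) mu).
apply => //.
- by move=> _; right; exists [::], (fun _ => point); rewrite cT.
- by rewrite bigcup_const.
- move=> _ [->|[s [w ->]]].
    by rewrite measure0.
  change (mu ((@Defs.shift d A u : config d A -> config d A) @^-1` cyl s w) = mu (cyl s w)).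
  rewrite shift_cyl !(bern_cyl hb).
  rewrite undup_map_inj; last by move=> a b /addIr.
  by rewrite big_map; under eq_bigr do rewrite subrK.
- move=> _; change (mu ((@Defs.shift d A u : config d A -> config d A) @^-1` setT) < +oo)%E.
  by rewrite preimage_setT probability_setT ltry.
Qed.

End Shift.

Lemma poly_ineq (R : realType) (k : R) (d : nat) : 2 <= k ->
  k * (k + 2) ^+ d <= k ^+ d.+1 + d%:R * 2 ^+ d.+1 * k ^+ d.
Proof.
move=> k2; have k0 : 0 <= k by lra.
elim: d => [|d IH]; first by rewrite !expr0 !expr1 !mul0r addr0 mulr1.
have e1 : k * (k + 2) ^+ d.+1 = (k + 2) * (k * (k + 2) ^+ d) by rewrite exprS; ring.
rewrite e1.
have h1 : (k + 2) * (k * (k + 2) ^+ d) <= (k + 2) * (k ^+ d.+1 + d%:R * 2 ^+ d.+1 * k ^+ d).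
  by rewrite ler_wpM2l //; lra.
apply: (le_trans h1).
have kd0 : 0 <= k ^+ d by apply: exprn_ge0.
have t0 : 0 <= 2 ^+ d :> R by apply: exprn_ge0.
have d0 : 0 <= d%:R :> R by [].
have t1 : 1 <= 2 ^+ d :> R by apply: exprn_ege1; lra.
rewrite !exprS.
set X := k ^+ d; set T := 2 ^+ d; set D := d%:R.
have hX : 2 * D * T * X <= D * T * k * X.
  have : 0 <= D * T * X by rewrite !mulr_ge0.
  nra.
have hk : k * X <= T * k * X.
  have kX : 0 <= k * X by apply: mulr_ge0.
  have T1 : 0 <= T - 1 by rewrite subr_ge0.
  have : 0 <= (T - 1) * (k * X) by apply: mulr_ge0.
  nra.
have eD : d.+1%:R = D + 1 :> R by rewrite -addn1 natrD.
rewrite eD -subr_ge0.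
have -> : k * (k * X) + (D + 1) * ((1 + 1) * ((1 + 1) * T)) * (k * X) -
  (k + (1 + 1)) * (k * X + D * ((1 + 1) * T) * X) =
  2 * (D * T * k * X - 2 * D * T * X) + 2 * (2 * (T * k * X) - k * X) by ring.
have kX : 0 <= k * X by apply: mulr_ge0.
have TkX : 0 <= T * k * X by apply: mulr_ge0 => //; apply: mulr_ge0.
lra.
Qed.

Lemma final_ineq (R : realType) (a b : R) (d : nat) :
  0 <= a -> a <= 1 -> 0 <= b ->
  (forall K, (2 <= K)%N -> a ^+ (K.+2 ^ d) <= b ^+ (K ^ d)) -> a <= b.
Proof.
move=> a0 a1 b0 H; rewrite leNgt; apply/negP => ba.
have a0' : 0 < a by apply: le_lt_trans ba.
have [bz|bp] : b = 0 \/ 0 < b by move: b0; rewrite le_eqVlt => /orP[/eqP<-|]; [left|right].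
  have := H 2%N isT; rewrite bz expr0n.
  have -> : (2 ^ d == 0)%N = false by apply/negbTE; rewrite -lt0n expn_gt0.
  by rewrite leNgt exprn_gt0.
set al := - ln a; set be := - ln b.
have hal : 0 <= al by rewrite /al oppr_ge0 ln_le0.
have hab : al < be by rewrite /al /be ltrN2 ltr_ln ?posrE.
have key : forall K, (2 <= K)%N -> K%:R * (be - al) <= d%:R * 2 ^+ d.+1 * al.
  move=> K K2; have hH := H K K2.
  have : ln (a ^+ (K.+2 ^ d)) <= ln (b ^+ (K ^ d)).
    by rewrite ler_ln // posrE exprn_gt0.
  rewrite !lnXn // -[ln a *+ _]mulr_natl -[ln b *+ _]mulr_natl !natrX.
  have -> : K.+2%:R = K%:R + 2 :> R by rewrite -addn2 natrD.
  set k := K%:R => hK.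
  have k2 : 2 <= k by rewrite /k (ler_nat R 2 K).
  have hK' : k ^+ d * be <= (k + 2) ^+ d * al.
    by rewrite /be /al !mulrN; lra.
  have kd : 0 < k ^+ d by apply: exprn_gt0; lra.
  have h2 : k ^+ d.+1 * be <= k ^+ d.+1 * al + d%:R * 2 ^+ d.+1 * k ^+ d * al.
    have := poly_ineq d k2.
    have k0 : 0 <= k by lra.
    move=> pi.
    have e : k ^+ d.+1 * be = k * (k ^+ d * be) by rewrite exprS mulrA.
    rewrite e.
    apply: (le_trans (ler_wpM2l k0 hK')).
    rewrite mulrA.
    have := ler_wpM2r hal pi.
    by rewrite mulrDl.
  have : k ^+ d * (k * (be - al) - d%:R * 2 ^+ d.+1 * al) <= 0.
    have -> : k ^+ d * (k * (be - al) - d%:R * 2 ^+ d.+1 * al) =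
      k ^+ d.+1 * be - (k ^+ d.+1 * al + d%:R * 2 ^+ d.+1 * k ^+ d * al)
      by rewrite !exprS; ring.
    by rewrite subr_le0.
  rewrite pmulr_rle0 // subr_le0.
  done.
set C := d%:R * 2 ^+ d.+1 * al.
have bal : 0 < be - al by rewrite subr_gt0.
have C0 : 0 <= C / (be - al).
  by apply: divr_ge0; [apply: mulr_ge0 => //; apply: mulr_ge0 | apply: ltW].
have hb := archi_boundP C0.
set K0 := Num.bound _ in hb.
have := key (K0 + 2)%N (leq_addl _ _).
rewrite -ler_pdivlMr // natrD.
move: hb; set z := C / (be - al); set y := K0%:R.
move=> h1 h2.
have : y + 2 < y by apply: le_lt_trans h2 h1.
lra.
Qed.

Section Geo.
Variables (d N : nat) (N0 : (0 < N)%N).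

Definition t0 : tor d N := [ffun _ => Ordinal N0].

Definition periodic (t : tor d N) (v : Zd d) :=
  forall i, exists k : int, v i = (t i)%:Z + k * N%:Z.

Lemma wrap0_eq t v : periodic t v -> Defs.wrap t0 v = t.
Proof.
move=> h; apply/ffunP => i; apply/val_inj; rewrite !ffunE /=.
have [k ->] := h i.
rewrite add0r addrC modzMDl modz_small //.
have := ltn_ord (t i); lia.
Qed.

Lemma wrap_shift t z v : periodic t v -> Defs.wrap t0 (z + v) = Defs.wrap t z.
Proof.
move=> h; apply/ffunP => i; apply/val_inj; rewrite !ffunE /=.
have [k ->] := h i.
have -> : 0 + (z i + ((t i)%:Z + k * N%:Z)) = k * N%:Z + ((t i)%:Z + z i) by ring.
by rewrite modzMDl.
Qed.

Definition regX K (t : tor d N) (j : {ffun 'I_d -> 'I_K.+2}) : Zd d :=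
  [ffun i => (t i)%:Z + (N * j i)%:Z - N%:Z].
Definition regY K (t : tor d N) (j : {ffun 'I_d -> 'I_K}) : Zd d :=
  [ffun i => (t i)%:Z + (N * j i)%:Z].

Lemma regX_per K t j : periodic t (@regX K t j).
Proof. move=> i; exists ((j i)%:Z - 1); rewrite ffunE; lia. Qed.
Lemma regY_per K t j : periodic t (@regY K t j).
Proof. move=> i; exists ((j i)%:Z); rewrite ffunE; lia. Qed.
Lemma tlift_per t : periodic t (tlift t).
Proof.
move=> i; rewrite ffunE; case: eqP => h.
  by exists 1; rewrite h; lia.
by exists 0; lia.
Qed.

Lemma tlift_inj : injective (@tlift d N).
Proof. by move=> t t' h; rewrite -(wrap0_eq (tlift_per t)) h (wrap0_eq (tlift_per t')). Qed.

Lemma regX_inj K : injective (fun pr : tor d N * {ffun 'I_d -> 'I_K.+2} => regX pr.1 pr.2).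
Proof.
move=> [t j] [t' j'] /= h.
have ett : t = t' by rewrite -(wrap0_eq (regX_per t j)) h (wrap0_eq (regX_per t' j')).
subst t'; congr pair; apply/ffunP => i; apply: ord_inj.
have := congr1 (fun f : Zd d => f i) h; rewrite !ffunE => e.
have e2 : (N * j i)%:Z = (N * j' i)%:Z by lia.
have e3 : (N * j i)%N = (N * j' i)%N by apply/eqP; rewrite -eqz_nat; apply/eqP.
by move/eqP: e3; rewrite eqn_pmul2l // => /eqP.
Qed.

Lemma regY_inj K : injective (fun pr : tor d N * {ffun 'I_d -> 'I_K} => regY pr.1 pr.2).
Proof.
move=> [t j] [t' j'] /= h.
have ett : t = t' by rewrite -(wrap0_eq (regY_per t j)) h (wrap0_eq (regY_per t' j')).
subst t'; congr pair; apply/ffunP => i; apply: ord_inj.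
have := congr1 (fun f : Zd d => f i) h; rewrite !ffunE => e.
have e2 : (N * j i)%:Z = (N * j' i)%:Z by lia.
have e3 : (N * j i)%N = (N * j' i)%N by apply/eqP; rewrite -eqz_nat; apply/eqP.
by move/eqP: e3; rewrite eqn_pmul2l // => /eqP.
Qed.

Lemma regX_surj K n t (j : {ffun 'I_d -> 'I_K}) z : (n < N)%N -> inbox n z ->
  exists pr : tor d N * {ffun 'I_d -> 'I_K.+2}, regX pr.1 pr.2 = z + regY t j.
Proof.
move=> nN hz.
pose m i := absz (z i + regY t j i + N%:Z).
have hm i : (m i)%:Z = z i + regY t j i + N%:Z.
  rewrite /m; have := hz i; have := ltn_ord (t i); rewrite ffunE; lia.
have hmK i : (m i < K.+2 * N)%N.
  have := hm i; have := hz i; have := ltn_ord (t i); have := ltn_ord (j i); rewrite ffunE; nia.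
exists ([ffun i => Ordinal (ltn_pmod (m i) N0)], [ffun i => inord (m i %/ N)]) => /=.
apply/ffunP => i; rewrite !ffunE /= inordK; last by rewrite ltn_divLR.
have := hm i; have := hmK i; rewrite ffunE; lia.
Qed.

End Geo.

Lemma null_bigU dd (T : measurableType dd) (R : realType) (mu : {measure set T -> \bar R})
  (I : Type) (s : seq I) (f : I -> set T) :
  (forall i, measurable (f i) /\ mu (f i) = 0%E) ->
  measurable (\big[setU/set0]_(i <- s) f i) /\ mu (\big[setU/set0]_(i <- s) f i) = 0%E.
Proof.
move=> h; elim: s => [|i s [m0 z0]].
  by rewrite big_nil; split; [exact: measurable0 | exact: measure0].
rewrite big_cons; have [mi zi] := h i; split; first exact: measurableU.
apply/eqP; rewrite eq_le measure_ge0 andbT.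
apply: le_trans (measureU2 mu mi m0) _.
have e1 : forall X : \bar R, X = 0%E -> (X <= 0)%E by move=> X ->.
by apply: le_trans (leeD (e1 _ zi) (e1 _ z0)) _; rewrite adde0.
Qed.

Lemma in_bigU (T I : eqType) (s : seq I) (f : I -> set T) i x :
  i \in s -> f i x -> (\big[setU/set0]_(j <- s) f j) x.
Proof.
elim: s => // k s IH; rewrite inE big_cons => /orP[/eqP <- h|/IH h /h]; by [left|right].
Qed.

Section Main.
Variables (R : realType) (d : nat) (A B : finPointedType) (p : A -> R) (q : B -> R)
  (mu : probability (config d A) R) (nu : probability (config d B) R)
  (phi : config d A -> config d B) (n N : nat) (F : (Zd d -> A) -> option B)
  (xh : tor d N -> A).
Hypotheses (hbp : is_bernoulli p mu) (hbq : is_bernoulli q nu)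
  (hphi : is_homomorphism mu nu phi) (nN : (n < N)%N) (N0 : (0 < N)%N)
  (hF : box_version mu phi n F).

Let T0 := @t0 d N N0.
Let bh := hatphi F xh.
Let w0 : Zd d -> A := fun v => xh (Defs.wrap T0 v).
Let wB : Zd d -> B := fun v => odflt point (bh (Defs.wrap T0 v)).
Definition aa := \prod_(t : tor d N) p (xh t).
Definition bb := \prod_(t | bh t != None) q (odflt point (bh t)).

Lemma cylA_eq : cylA xh = cyl (map (@tlift d N) (index_enum (tor d N))) w0.
Proof.
apply/seteqP; split => x /=.
  move=> h _ /mapP[t _ ->]; by rewrite h /w0 (wrap0_eq N0 (tlift_per N0 _)).
move=> h t; rewrite h; last by apply: map_f; exact: mem_index_enum.
by rewrite /w0 (wrap0_eq N0 (tlift_per N0 _)).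
Qed.

Lemma L1 : mu (cylA xh) = aa%:E.
Proof.
rewrite cylA_eq (bern_map hbp) //; last exact: index_enum_uniq; last exact: (tlift_inj N0).
congr (_%:E); apply: eq_bigr => t _; by rewrite /w0 (wrap0_eq N0 (tlift_per N0 _)).
Qed.

Lemma L2 : nu (cylB bh) = bb%:E.
Proof.
have -> : cylB bh = cyl (map (@tlift d N) [seq t <- index_enum (tor d N) | bh t != None]) wB.
  apply/seteqP; split => x /=.
    move=> h u /mapP[t]; rewrite mem_filter => /andP[bt _] ->.
    rewrite /wB (wrap0_eq N0 (tlift_per N0 _)).
    by case: (h t) bt => ->.
  move=> h t; case E: (bh t) => [c|]; [right|by left].
  rewrite (h (tlift t)); last by apply: map_f; rewrite mem_filter E mem_index_enum.
  by rewrite /wB (wrap0_eq N0 (tlift_per N0 _)) E.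
rewrite (bern_map hbq) //; last exact: (filter_uniq _ (index_enum_uniq _)); last exact: (tlift_inj N0).
congr (_%:E); rewrite big_filter; apply: eq_bigr => t _.
by rewrite /wB (wrap0_eq N0 (tlift_per N0 _)).
Qed.

Definition EX K := cyl (map (fun pr : (tor d N * {ffun 'I_d -> 'I_K.+2})%type => regX pr.1 pr.2)
  (index_enum _)) w0.
Definition sY K := [seq pr <- index_enum (tor d N * {ffun 'I_d -> 'I_K})%type | bh pr.1 != None].
Definition EY K := cyl (map (fun pr : (tor d N * {ffun 'I_d -> 'I_K})%type => regY pr.1 pr.2)
  (sY K)) wB.

Lemma L3 K : mu (EX K) = (aa ^+ (K.+2 ^ d))%:E.
Proof.
rewrite /EX (bern_map hbp) //; last exact: index_enum_uniq; last exact: (regX_inj N0).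
congr (_%:E).
have -> : \prod_(pr <- index_enum (tor d N * {ffun 'I_d -> 'I_K.+2})%type)
    p (w0 (regX pr.1 pr.2)) =
    \prod_(t : tor d N) \prod_(j : {ffun 'I_d -> 'I_K.+2}) p (xh t).
  rewrite pair_big /=; apply: eq_bigr => pr _; by rewrite /w0 (wrap0_eq N0 (regX_per N0 _ _)).
under eq_bigr do rewrite prodr_const.
by rewrite prodrXl card_ffun !card_ord.
Qed.

Lemma L4 K : nu (EY K) = (bb ^+ (K ^ d))%:E.
Proof.
rewrite /EY (bern_map hbq) //; last exact: (filter_uniq _ (index_enum_uniq _)); last exact: (regY_inj N0).
congr (_%:E); rewrite /sY big_filter.
have -> : \prod_(pr <- index_enum (tor d N * {ffun 'I_d -> 'I_K})%type | bh pr.1 != None)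
    q (wB (regY pr.1 pr.2)) =
    \prod_(t | bh t != None) \prod_(j : {ffun 'I_d -> 'I_K}) q (odflt point (bh t)).
  rewrite pair_big /=; apply: eq_big => [pr|pr _]; first by rewrite andbT.
  by rewrite /wB (wrap0_eq N0 (regY_per N0 _ _)).
under eq_bigr do rewrite prodr_const.
by rewrite prodrXl card_ffun !card_ord.
Qed.


Lemma L5 K : (mu (EX K) <= nu (EY K))%E.
Proof.
have [mphi hcomm hpush] := hphi.
have [hFbox hFae] := hF.
case: hFae => S0 [mS0 muS0 subS0].
have good : forall x, ~ S0 x -> phin0 mu phi n x = F x.
  by move=> x nS; apply: contra_notP nS => h; apply: subS0.
pose Nall := \big[setU/set0]_(pr <- sY K)
  ((Defs.shift (- regY pr.1 pr.2) : config d A -> config d A) @^-1` S0).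
have [mN zN] : measurable Nall /\ mu Nall = 0%E.
  apply: null_bigU => pr; split.
    by rewrite -[X in measurable X]setTI; apply: shift_meas.
  exact: (etrans (shift_inv hbp _ mS0) muS0).
have sub : EX K `<=` (phi @^-1` EY K) `|` Nall.
  move=> x hx; case: (pselect (Nall x)) => hN; [by right|left].
  move=> /= z /mapP[[t j] prs ->] /=.
  have bt : bh t != None by move: prs; rewrite mem_filter => /andP[].
  have nS : ~ S0 (Defs.shift (- regY t j) x).
    by move=> hS; apply: hN; apply: (in_bigU prs).
  have e1 := good _ nS.
  have e2 : F (Defs.shift (- regY t j) x) = bh t.
    rewrite /bh /hatphi; apply: hFbox => v hv.
    rewrite /Defs.shift opprK /pext.
    have [pr' e] := regX_surj N0 t j nN hv.
    rewrite -e hx; last by apply: map_f; exact: mem_index_enum.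
    by rewrite /w0 e (wrap_shift N0 _ (regY_per N0 _ _)).
  move: e1; rewrite e2 /phin0.
  case E: (bh t) bt => [c|] // _.
  case: asboolP => // _ [e3].
  rewrite /wB (wrap0_eq N0 (regY_per N0 _ _)) E /= -e3 hcomm /Defs.shift sub0r opprK.
  done.
have mpre : measurable (phi @^-1` EY K).
  by rewrite -[X in measurable X]setTI; apply: mphi => //; exact: cyl_meas.
rewrite (hpush _ (cyl_meas _ _)).
have h1 : (mu (EX K) <= mu (phi @^-1` EY K `|` Nall))%E.
  have mEX : measurable (EX K : set (config d A)) by exact: cyl_meas.
  have mU : measurable (phi @^-1` EY K `|` Nall) by exact: measurableU.
  exact: (le_measure mu (mem_set mEX) (mem_set mU) sub).
apply: le_trans h1 _.
have e1 : forall X : \bar R, X = 0%E -> (X <= 0)%E by move=> X ->.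
apply: le_trans (measureU2 mu mpre mN) _.
by apply: le_trans (leeD (lexx _) (e1 _ zN)) _; rewrite adde0.
Qed.

End Main.


Unset Implicit Arguments.

Theorem lemma5 (R : realType) (d : nat) (A B : finPointedType)
    (p : A -> R) (q : B -> R)
    (mu : probability (config d A) R) (nu : probability (config d B) R)
    (phi : config d A -> config d B)
    (n N : nat) (F : (Zd d -> A) -> option B) (xh : tor d N -> A) :
  prob_vector p -> prob_vector q ->
  is_bernoulli p mu -> is_bernoulli q nu ->
  is_homomorphism mu nu phi -> finitary mu phi ->
  (2 * n + 1 <= N)%N ->
  box_version mu phi n F ->
  (mu (cylA xh) <= nu (cylB (hatphi F xh)))%E.
Proof.
move=> [p0 _] [q0 _] hbp hbq hphi _ hN hF.
have N0 : (0 < N)%N by lia.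
have nN : (n < N)%N by lia.
rewrite (L1 xh hbp N0) (L2 F xh hbq N0) lee_fin.
apply: (@final_ineq R _ _ d).
- by apply: prodr_ge0 => t _.
- have mA : measurable (cylA xh : set (config d A)).
    by rewrite (cylA_eq xh N0); exact: cyl_meas.
  have := probability_le1 mu mA.
  by rewrite (L1 xh hbp N0) lee_fin.
- by apply: prodr_ge0 => t _.
- move=> K _.
  have := L5 xh hbp hphi nN N0 hF K.
  by rewrite (L3 xh hbp N0 K) (L4 F xh hbq N0 K) lee_fin.
Qed.
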